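(* Let $K$ be a good triangulation of $P^n$, let $T\in C^2(K,W;\mathbb Q)$ be a Thom cocycle of $H_{1,0}$, and let $\mathcal O$ be a good ordering of $K$ with respect to $H_{1,0}$. Then: (1) the map $\alpha\mapsto T\overset{\mathcal O}{\cap}\alpha$ commutes with the boundary $\delta$; (2) the image of $T\overset{\mathcal O}{\cap}:C_k(K;\mathbb Q)\to C_{k-2}(K;\mathbb Q)$ is contained in $C_{k-2}(L_1;\mathbb Q)$, where $L_1=K\cap H_{1,0}$. Consequently $T\overset{\mathcal O}{\cap}$ induces a homomorphism of complexes $C_k(K,\mathbf D^n;\mathbb Q)\to C_{k-2}(L_1,\mathbf D^{n-1};\mathbb Q)$.
   Context: $P^n=(\mathbb P^1_{\mathbb C})^n$ with coordinates $z_1,\dots,z_n$; $H_{i,\alpha}=\{z_i=\alpha\}$ for $\alpha\in\{0,\infty\}$; cubical faces are nonempty intersections of one or more $H_{i,\alpha}$; $\mathbf D^n=\bigcup_i\{z_i=1\}$. $H_{1,0}$ is identified with $P^{n-1}$ via $(0,z_2,\dots,z_n)\mapsto(z_2,\dots,z_n)$, and $\mathbf D^{n-1}$ denotes $\mathbf D^n\cap H_{1,0}$. A good triangulation of $P^n$ is a finite simplicial complex $K$ with a semi-algebraic homeomorphism $|K|\to P^n$ (used to identify them) such that: (1) $\mathbf D^n$ is a subcomplex; (2) the image of the relative interior of each simplex is a regular submanifold; (3) every finite union of cubical faces is a full subcomplex (a subcomplex $L$ such that any simplex of $K$ all of whose vertices lie in $L$ belongs to $L$); (4) each set $\{|z_i|\le1\}$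 is a subcomplex. Let $W$ be the union of the simplices of $K$ not meeting $H_{1,0}$ and $\Delta=\{|z_1|<1\}$. There are isomorphisms $H^2(K,W;\mathbb Q)\leftarrow H^2_{\rm sing}(P^n,P^n-H_{1,0};\mathbb Q)\to H^2_{\rm sing}(\Delta,\Delta-H_{1,0};\mathbb Q)$. A Thom cocycle is a simplicial cocycle $T\in C^2(K,W;\mathbb Q)$ (i.e. vanishing on simplices in $W$) whose class corresponds under these isomorphisms to $\delta[\frac{dz_1}{2\pi i z_1}]$, where $[\frac{dz_1}{2\pi i z_1}]\in H^1_{\rm sing}(\Delta-H_{1,0};\mathbb Q)$ and $\delta$ is the connecting homomorphism. An ordering of $K$ is a partial order on the vertices whose restriction to the vertices of each simplex is total; it is good with respect to $H_{1,0}$ if whenever a vertex $v$ lies on $H_{1,0}$ and $w\ge v$, then $w\in H_{1,0}$. For $u\in C^p(K;\mathbb Q)$ and a simplex $\alpha=[v_0,\dots,v_k]$ with $v_0<\dots<v_k$, $u\overset{\mathcal O}{\cap}\alpha=u([v_0,\dots,v_p])\,[v_p,\dots,v_k]$, extended linearly. *)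

(* Defs.v *)
From mathcomp Require Import all_boot all_order all_algebra.
Set Implicit Arguments. Unset Strict Implicit. Unset Printing Implicit Defensive.
Import GRing.Theory Num.Theory.
Local Open Scope ring_scope.

Section Simplicial.
Variable V : finType.

Definition is_complex (K : {set {set V}}) : Prop :=
  (forall s, s \in K -> s != set0) /\
  (forall s t : {set V}, s \in K -> t \subset s -> t != set0 -> t \in K).

Definition subcomplex (L K : {set {set V}}) : Prop :=
  L \subset K /\ is_complex L.

Definition vert (L : {set {set V}}) : {set V} := [set v | [set v] \in L].

Definition full (L K : {set {set V}}) : Prop :=
  forall s, s \in K -> s \subset vert L -> s \in L.

Definition ordering (K : {set {set V}}) (le : rel V) : Prop :=
  reflexive le /\ antisymmetric le /\ transitive le /\
  (forall s, s \in K -> {in s &, forall v w, le v w || le w v}).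

Definition good_ordering (L : {set {set V}}) (le : rel V) : Prop :=
  forall v w, v \in vert L -> le v w -> w \in vert L.

Definition ltv (le : rel V) v w := (v != w) && le v w.

(* position (0-based) of v in the simplex s for the ordering *)
Definition rank (le : rel V) (s : {set V}) (v : V) : nat :=
  #|[set w in s | ltv le w v]|.

(* simplicial chains / cochains with rational coefficients,
   indexed by the (ordered) simplices *)
Definition chain := {set V} -> rat.
Definition cochain := {set V} -> rat.

Definition chain_in (S : {set {set V}}) (k : nat) (c : chain) : Prop :=
  forall s, c s != 0 -> s \in S /\ #|s| = k.+1.

(* boundary:  d[v0..vk] = sum_i (-1)^i [v0..^vi..vk] *)
Definition bd (le : rel V) (c : chain) : chain := fun t =>
  if t == set0 then 0 else
  \sum_(v in ~: t) (-1) ^+ (rank le (v |: t) v) * c (v |: t).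

(* coboundary: (du)[v0..v(p+1)] = sum_i (-1)^i u[v0..^vi..v(p+1)] *)
Definition cobd (le : rel V) (u : cochain) : cochain := fun s =>
  \sum_(v in s) (-1) ^+ (rank le s v) * u (s :\ v).

Definition front (le : rel V) (p : nat) (s : {set V}) : {set V} :=
  [set v in s | (rank le s v <= p)%N].
Definition back (le : rel V) (p : nat) (s : {set V}) : {set V} :=
  [set v in s | (p <= rank le s v)%N].

(* ordered cap product: u cap [v0..vk] = u([v0..vp]) [vp..vk] (for k >= p),
   extended linearly; simplices of dimension < p give 0 *)
Definition cap (le : rel V) (p : nat) (u : cochain) (c : chain) : chain :=
  fun t => \sum_(s : {set V} | (p < #|s|)%N)
             (if back le p s == t then c s * u (front le p s) else 0).

(* W = simplices of K not meeting H_{1,0}, i.e. with no vertex in L1 *)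
Definition Wcomplex (K L1 : {set {set V}}) : {set {set V}} :=
  [set s in K | [disjoint s & vert L1]].

Definition rel_2cocycle (K W : {set {set V}}) (le : rel V) (T : cochain) : Prop :=
  (forall s, s \in K -> #|s| = 4%N -> cobd le T s = 0) /\
  (forall s, s \in W -> #|s| = 3%N -> T s = 0).

End Simplicial.

(* Main.v *)
Require Import Defs.
From mathcomp Require Import all_boot all_order all_algebra zify.
Set Implicit Arguments. Unset Strict Implicit. Unset Printing Implicit Defensive.
Import GRing.Theory Num.Theory.

Section R.
Variables (V : finType) (le : rel V) (S : {set V}).
Hypothesis ordS : reflexive le /\ antisymmetric le /\ transitive le /\
  {in S &, forall v w, le v w || le w v}.
Let anti : antisymmetric le := ordS.2.1.
Let tr : transitive le := ordS.2.2.1.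
Let tot : {in S &, forall v w, le v w || le w v} := ordS.2.2.2.
Local Notation r := (rank le S).

Lemma ltv_trans x y z : ltv le x y -> ltv le y z -> ltv le x z.
Proof.
rewrite /ltv => /andP[nxy lxy] /andP[nyz lyz]; rewrite (tr lxy lyz) andbT.
apply/eqP=> exz; subst z; move/negP: nxy; apply; by apply/eqP/anti; rewrite lxy lyz.
Qed.

Lemma ltv_irr x : ltv le x x = false.
Proof. by rewrite /ltv eqxx. Qed.

Lemma rank_lt x y : x \in S -> y \in S -> ltv le x y -> (r x < r y)%N.
Proof.
move=> xS yS lxy; apply: proper_card; apply/properP; split.
  apply/subsetP=> w; rewrite !inE => /andP[-> /ltv_trans]; exact.
by exists x; rewrite !inE ?xS ?lxy // ltv_irr.
Qed.

Lemma ltv_total x y : x \in S -> y \in S -> x != y -> ltv le x y || ltv le y x.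
Proof.
move=> xS yS nxy; rewrite /ltv nxy eq_sym nxy /=; exact: tot.
Qed.

Lemma lt_rank x y : x \in S -> y \in S -> (r x < r y)%N -> ltv le x y.
Proof.
move=> xS yS lt; have [exy|nxy] := eqVneq x y; first by subst; rewrite ltnn in lt.
case/orP: (ltv_total xS yS nxy) => // /(rank_lt yS xS) h.
by move: (ltn_trans lt h); rewrite ltnn.
Qed.

Lemma ltvE x y : x \in S -> y \in S -> ltv le x y = (r x < r y)%N.
Proof. by move=> xS yS; apply/idP/idP; [apply: rank_lt | apply: lt_rank]. Qed.

Lemma rank_inj x y : x \in S -> y \in S -> r x = r y -> x = y.
Proof.
move=> xS yS e; apply/eqP/negPn/negP => nxy.
by case/orP: (ltv_total xS yS nxy); rewrite ltvE // e ltnn.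
Qed.

Lemma rank_ltn x : x \in S -> (r x < #|S|)%N.
Proof.
move=> xS; apply: proper_card; apply/properP; split.
  by apply/subsetP=> w; rewrite inE => /andP[].
by exists x => //; rewrite inE ltv_irr andbF.
Qed.

Lemma card_le_iota (A : {set V}) a k : A \subset S ->
  (forall x, x \in A -> (a <= r x < a + k)%N) -> (#|A| <= k)%N.
Proof.
move=> AS h; rewrite cardE -(size_iota a k) -(size_map r).
apply: uniq_leq_size.
  rewrite map_inj_in_uniq ?enum_uniq // => x y; rewrite !mem_enum => xA yA.
  by apply: rank_inj; apply: (subsetP AS).
move=> i /mapP[x]; rewrite mem_enum mem_iota => /h ? ->; done.
Qed.

Lemma card_rank_lt m : (m <= #|S|)%N -> #|[set x in S | (r x < m)%N]| = m.
Proof.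
move=> mS; set A := [set x in S | _].
have AS : A \subset S by apply/subsetP=> x; rewrite inE => /andP[].
have h1 : (#|A| <= m)%N.
  by apply: (@card_le_iota A 0 m AS) => x; rewrite inE => /andP[].
have h2 : (#|S :\: A| <= #|S| - m)%N.
  apply: (@card_le_iota (S :\: A) m (#|S| - m) (subsetDl _ _)) => x; rewrite !inE => /andP[].
  move=> + xS; rewrite xS /= -leqNgt => mx; rewrite mx subnKC //.
  exact: rank_ltn.
have := cardsID A S; rewrite (setIidPr AS) => e.
apply/eqP; rewrite eqn_leq h1 /=; lia.
Qed.


Lemma rank_sub (U : {set V}) x : U \subset S -> x \in U ->
  rank le U x = #|[set y in U | (r y < r x)%N]|.
Proof.
move=> US xU; rewrite /rank; apply: eq_card => y; rewrite !inE.
case yU: (y \in U) => //=; apply: ltvE; exact: (subsetP US).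
Qed.

Lemma card_between a b : (a <= b <= #|S|)%N ->
  #|[set x in S | (a <= r x < b)%N]| = (b - a)%N.
Proof.
move=> /andP[ab bS]; have aS : (a <= #|S|)%N by apply: leq_trans bS.
have := cardsID [set x in S | (r x < a)%N] [set x in S | (r x < b)%N].
rewrite card_rank_lt // => e.
have E1 : [set x in S | (r x < b)%N] :&: [set x in S | (r x < a)%N]
        = [set x in S | (r x < a)%N].
  apply/setP=> x; rewrite !inE; case: (x \in S) => //=.
  case h: (r x < a)%N; rewrite ?andbT ?andbF //; apply: leq_trans h ab.
have E2 : [set x in S | (a <= r x < b)%N] =
    [set x in S | (r x < b)%N] :\: [set x in S | (r x < a)%N].
  apply/setP=> x; rewrite !inE; case: (x \in S); rewrite ?andbF //=.
  by rewrite -leqNgt andbC.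
rewrite E2; rewrite E1 card_rank_lt // in e; lia.
Qed.

Lemma exists_rank i : (i < #|S|)%N -> exists2 x, x \in S & r x = i.
Proof.
move=> iS; have := card_between (a := i) (b := i.+1); rewrite leqnSn iS subSnn => /(_ isT).
move/eqP/cards1P=> [x ex].
have : x \in [set x] by rewrite inE.
rewrite -ex inE => /andP[xS hx]; exists x => //; move: hx => /andP[h1 h2]; apply/eqP; by rewrite eqn_leq h1 andbT -ltnS h2.
Qed.

Lemma rank_setD1 w x : w \in S -> x \in S -> x != w ->
  rank le (S :\ w) x = (r x - (r w < r x))%N.
Proof.
move=> wS xS nxw; rewrite rank_sub ?subsetDl // ?inE ?nxw //.
have -> : [set y in S :\ w | (r y < r x)%N] = [set y in S | (r y < r x)%N] :\ w.
  by apply/setP=> y; rewrite !inE andbA.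
have := cardsD1 w [set y in S | (r y < r x)%N]; rewrite inE wS /= => e.
have : #|[set y in S | (r y < r x)%N]| = r x.
  by rewrite /rank; apply: eq_card => y; rewrite !inE; case yS: (y \in S) => //=; rewrite ltvE.
move=> e2; rewrite e2 in e; case: (r w < r x)%N e => /= e; lia.
Qed.

Lemma front_D1_hi w : w \in S -> (3 <= r w)%N -> front le 2 (S :\ w) = front le 2 S.
Proof.
move=> wS hw; apply/setP=> x; rewrite !inE.
have [->|nxw] := eqVneq x w; rewrite /=; first by rewrite wS /= leqNgt hw.
case xS: (x \in S) => //=; rewrite rank_setD1 //.
by case: (ltnP (r w) (r x)) => /= h; lia.
Qed.

Lemma back_D1_hi w : w \in S -> (3 <= r w)%N -> back le 2 (S :\ w) = back le 2 S :\ w.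
Proof.
move=> wS hw; apply/setP=> x; rewrite !inE.
have [->|nxw] := eqVneq x w; rewrite /=; first by [].
case xS: (x \in S) => //=; rewrite rank_setD1 //.
by case: (ltnP (r w) (r x)) => /= h; lia.
Qed.

Lemma front_D1_lo w : w \in S -> (r w <= 2)%N ->
  front le 2 (S :\ w) = [set x in S | (r x <= 3)%N] :\ w.
Proof.
move=> wS hw; apply/setP=> x; rewrite !inE.
have [->|nxw] := eqVneq x w; rewrite /=; first by [].
case xS: (x \in S) => //=; rewrite rank_setD1 //.
have : r x != r w by apply: contra nxw => /eqP/rank_inj ->.
by case: (ltnP (r w) (r x)) => /= h; lia.
Qed.

Lemma back_D1_lo w : w \in S -> (r w <= 2)%N ->
  back le 2 (S :\ w) = [set x in S | (3 <= r x)%N].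
Proof.
move=> wS hw; apply/setP=> x; rewrite !inE.
have [->|nxw] := eqVneq x w; rewrite /=; first by rewrite /= wS leqNgt ltnS hw.
case xS: (x \in S) => //=; rewrite rank_setD1 //.
have : r x != r w by apply: contra nxw => /eqP/rank_inj ->.
by case: (ltnP (r w) (r x)) => /= h; lia.
Qed.

Lemma rank_back v : v \in S -> (2 <= r v)%N -> rank le (back le 2 S) v = (r v - 2)%N.
Proof.
move=> vS hv; rewrite rank_sub ?inE ?vS ?hv //; last first.
  by apply/subsetP=> x; rewrite inE => /andP[].
rewrite -card_between; last by rewrite hv ltnW // rank_ltn.
by apply: eq_card => x; rewrite !inE andbA.
Qed.

Lemma rank_F4 v : v \in S -> (r v <= 3)%N ->
  rank le [set x in S | (r x <= 3)%N] v = r v.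
Proof.
move=> vS hv; rewrite rank_sub ?inE ?vS ?hv //; last first.
  by apply/subsetP=> x; rewrite inE => /andP[].
rewrite [RHS]/rank; apply: eq_card => y; rewrite !inE.
case yS: (y \in S) => //=; rewrite ltvE //.
by case h: (r y < r v)%N; rewrite ?andbT ?andbF //; lia.
Qed.

End R.

Local Open Scope ring_scope.

Definition ech (V : finType) (σ : {set V}) : chain V := fun s => (s == σ)%:R.

Lemma sum_only (I : finType) (P : pred I) (F : I -> rat) i0 :
  (forall i, P i -> i != i0 -> F i = 0) ->
  \sum_(i | P i) F i = if P i0 then F i0 else 0.
Proof.
move=> H; case: (boolP (P i0)) => h.
  by rewrite (bigD1 i0) //= big1 ?addr0 // => i /andP[]; exact: H.
rewrite big1 // => i Pi; apply: (H i Pi); apply/eqP => e; by rewrite -e Pi in h.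
Qed.

Section Single.
Variables (V : finType) (le : rel V) (S : {set V}) (T : cochain V).
Hypothesis ordS : reflexive le /\ antisymmetric le /\ transitive le /\
  {in S &, forall v w, le v w || le w v}.
Local Notation r := (rank le S).
Local Notation n := #|S|.

Lemma cap_e (σ : {set V}) t : cap le 2 T (ech σ) t =
  if (2 < #|σ|)%N && (back le 2 σ == t) then T (front le 2 σ) else 0.
Proof.
rewrite /cap (sum_only (i0 := σ)).
  by rewrite /ech eqxx mul1r; case: (2 < #|σ|)%N => //=; case: ifP.
by move=> s _ ns; rewrite /ech (negbTE ns) mul0r; case: ifP.
Qed.

Lemma cards_ge a : #|[set x in S | (a <= r x)%N]| = (n - a)%N.
Proof.
case: (leqP a n) => an.
  rewrite -(card_between ordS) ?an ?leqnn //.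
  by apply: eq_card => x; rewrite !inE; case xS: (x \in S) => //=; rewrite rank_ltn // andbT.
have -> : [set x in S | (a <= r x)%N] = set0.
  apply/setP=> x; rewrite !inE; case xS: (x \in S) => //=.
  by have := rank_ltn le xS; lia.
by rewrite cards0; lia.
Qed.

Lemma lhs_form t : bd le (cap le 2 T (ech S)) t =
  if t == set0 then 0 else
  \sum_(v in back le 2 S)
     (if t == back le 2 S :\ v then (-1) ^+ r v * T (front le 2 S) else 0).
Proof.
rewrite /bd; case: eqP => // tn.
under eq_bigr do rewrite cap_e.
rewrite big_mkcond [RHS]big_mkcond; apply: eq_bigr => v _.
rewrite in_setC; case vt: (v \in t) => /=.
  by case: ifP => //; case: ifP => // /eqP et; rewrite et !inE eqxx in vt.
case: (boolP (back le 2 S == v |: t)) => eb; last first.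
  rewrite andbF mulr0; case: ifP => //; case: ifP => // /eqP et vb.
  by move: eb; rewrite et setD1K ?eqxx.
have vb : v \in back le 2 S by rewrite (eqP eb) setU11.
move: (vb); rewrite inE => /andP[vS hv].
have n2 : (2 < n)%N by have := rank_ltn le vS; lia.
rewrite vS hv n2 /= [in t == _](eqP eb) setU1K ?vt // eqxx -(eqP eb) rank_back //.
have -> : ((-1) ^+ r v = (-1) ^+ (r v - 2) :> rat) by rewrite -{1}(subnK hv) exprD mulr1.
by [].
Qed.


Lemma rhs_form t : cap le 2 T (bd le (ech S)) t =
  \sum_(v in S) (if (3 < n)%N && (back le 2 (S :\ v) == t)
                 then (-1) ^+ r v * T (front le 2 (S :\ v)) else 0).
Proof.
rewrite /cap.
transitivity (\sum_(s : {set V} | (2 < #|s|)%N) \sum_(v : V)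
   (if (v \notin s) && (v |: s == S) && (back le 2 s == t)
    then (-1) ^+ rank le (v |: s) v * T (front le 2 s) else 0)).
  apply: eq_bigr => s hs; rewrite /bd.
  have sn : s != set0 by apply/eqP => e; rewrite e cards0 in hs.
  rewrite (negbTE sn); case: ifP => bt; last first.
    by rewrite big1 // => v _; rewrite andbF.
  rewrite mulr_suml big_mkcond; apply: eq_bigr => v _; rewrite in_setC.
  case: (v \in s) => //=; rewrite /ech; case: eqP => _ /=.
    by rewrite mulr1.
  by rewrite mulr0 mul0r.
rewrite exchange_big /= [RHS]big_mkcond; apply: eq_bigr => v _.
rewrite (sum_only (i0 := S :\ v)); last first.
  move=> s _ ns; case: ifP => // /andP[/andP[vs /eqP e] _].
  by move: ns; rewrite -e setU1K // eqxx.
have := cardsD1 v S.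
case vS: (v \in S) => /= cS.
  rewrite setD1K // eqxx !inE eqxx /=.
  have -> : (2 < #|S :\ v|)%N = (3 < n)%N by lia.
  by case: (3 < n)%N.
case: ifP => //; case: ifP => // /andP[/andP[_ /eqP e] _].
by move: vS; rewrite -e setU11.
Qed.


Lemma backD1_2 v : v \in S -> r v = 2%N ->
  back le 2 S :\ v = [set x in S | (3 <= r x)%N].
Proof.
move=> vS hv; apply/setP=> x; rewrite !inE.
have [->|nxv] := eqVneq x v; first by rewrite vS hv.
rewrite /=; case xS: (x \in S) => //=.
have : r x != r v by apply: contra nxv => /eqP/(rank_inj ordS xS vS) ->.
by rewrite hv; lia.
Qed.

Lemma F4D1_3 v : v \in S -> r v = 3%N ->
  [set x in S | (r x <= 3)%N] :\ v = front le 2 S.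
Proof.
move=> vS hv; apply/setP=> x; rewrite !inE.
have [->|nxv] := eqVneq x v; first by rewrite vS hv.
rewrite /=; case xS: (x \in S) => //=.
have : r x != r v by apply: contra nxv => /eqP/(rank_inj ordS xS vS) ->.
by rewrite hv; lia.
Qed.

Hypothesis hT : (3 < n)%N -> cobd le T [set x in S | (r x <= 3)%N] = 0.

Lemma coc : (3 < n)%N ->
  \sum_(v in S | (r v <= 2)%N) (-1) ^+ r v * T ([set x in S | (r x <= 3)%N] :\ v)
  = T (front le 2 S).
Proof.
move=> n3; have := hT n3; rewrite /cobd (bigID (fun v => (r v <= 2)%N)) /=.
have [v3 v3S rv3] := exists_rank ordS n3.
rewrite [X in _ + X](sum_only (i0 := v3)); last first.
  move=> v; rewrite inE => /andP[/andP[vS hv] hv2] nv; exfalso; move/negP: nv; apply.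
  by apply/eqP; apply: (rank_inj ordS vS v3S); lia.
rewrite inE v3S rv3 /= rank_F4 ?rv3 // F4D1_3 //. 
rewrite (_ : (-1) ^+ 3 = -1 :> rat) //.
rewrite mulN1r => /eqP; rewrite subr_eq0 => /eqP <-.
apply: eq_big => v; first by rewrite inE; case: (v \in S) => //=; case h: (r v <= 2)%N; rewrite ?andbT ?andbF //; lia.
by move=> /andP[vS hv]; rewrite rank_F4 //; lia.
Qed.

Lemma single t : bd le (cap le 2 T (ech S)) t = cap le 2 T (bd le (ech S)) t.
Proof.
rewrite lhs_form rhs_form.
have cB3 : #|[set x in S | (3 <= r x)%N]| = (n - 3)%N := cards_ge 3.
have cB2 : #|back le 2 S| = (n - 2)%N := cards_ge 2.
case: eqP => [->|/eqP tn].
  symmetry; apply: big1 => v vS; case: ifP => // /andP[n3 /eqP e]; exfalso.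
  case: (leqP (r v) 2) => hv.
    by move: e; rewrite back_D1_lo // => e; rewrite e cards0 in cB3; lia.
  move: e; rewrite back_D1_hi // => e.
  have := cardsD1 v (back le 2 S); rewrite e cards0 inE vS cB2 /=.
  have -> : (2 <= r v)%N by lia.
  lia.
rewrite (bigID (fun v => (r v <= 2)%N)) [RHS](bigID (fun v => (r v <= 2)%N)) /=.
congr (_ + _); last first.
  apply: eq_big => v.
    by rewrite inE; case: (v \in S) => //=; case h: (r v <= 2)%N; rewrite ?andbT ?andbF //=; lia.
  rewrite inE => /andP[/andP[vS hv] hv2].
  rewrite back_D1_hi ?front_D1_hi //; try lia.
  have n3 : (3 < n)%N by have := rank_ltn le vS; lia.
  by rewrite n3 /= eq_sym.
case: (boolP ((3 < n)%N && ([set x in S | (3 <= r x)%N] == t))) => cnd.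
  case/andP: (cnd) => n3 /eqP Bt.
  have n2 : (2 < n)%N by lia.
  have [v2 v2S rv2] := exists_rank ordS n2.
  rewrite (sum_only (i0 := v2)); last first.
    move=> v; rewrite inE => /andP[/andP[vS hv] hv2] nv; exfalso; move/negP: nv; apply.
    by apply/eqP; apply: (rank_inj ordS vS v2S); lia.
  rewrite inE v2S rv2 /= backD1_2 // Bt eqxx mul1r -(coc n3).
  apply: eq_bigr => v /andP[vS hv].
  by rewrite back_D1_lo // front_D1_lo // cnd.
rewrite [RHS]big1; last first.
  move=> v /andP[vS hv]; rewrite back_D1_lo //; by rewrite (negbTE cnd).
apply: big1 => v; rewrite inE => /andP[/andP[vS hv] hv2].
have rv : r v = 2%N by lia.
rewrite backD1_2 //; case: eqP => // et; exfalso.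
move: cnd; rewrite -et eqxx andbT -leqNgt => n3.
by move/negP: tn; apply; rewrite -cards_eq0 et cB3; apply/eqP; lia.
Qed.

End Single.

Section Lin.
Variables (V : finType) (le : rel V) (T : cochain V).

Lemma ech_sum (c : chain V) s : c s = \sum_σ c σ * ech σ s.
Proof.
rewrite (sum_only (i0 := s)) /ech ?eqxx ?mulr1 // => σ _ ns.
by rewrite eq_sym (negbTE ns) mulr0.
Qed.

Lemma bd_rep (c : chain V) t : bd le c t = \sum_σ c σ * bd le (ech σ) t.
Proof.
rewrite /bd; case: ifP => _; first by rewrite big1 // => σ _; rewrite mulr0.
under eq_bigr do rewrite (ech_sum c) mulr_sumr.
rewrite exchange_big /=; apply: eq_bigr => σ _; rewrite mulr_sumr.
by apply: eq_bigr => v _; rewrite mulrCA.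
Qed.

Lemma cap_rep (c : chain V) t : cap le 2 T c t = \sum_σ c σ * cap le 2 T (ech σ) t.
Proof.
under [RHS]eq_bigr do rewrite cap_e.
rewrite /cap big_mkcond; apply: eq_bigr => s _.
by case: (2 < #|s|)%N; case: (back le 2 s == t); rewrite /= ?mulr0.
Qed.

Lemma comp_rep (L M : chain V -> chain V) :
  (forall c t, L c t = \sum_σ c σ * L (ech σ) t) ->
  (forall c t, M c t = \sum_σ c σ * M (ech σ) t) ->
  forall c t, L (M c) t = \sum_ρ c ρ * L (M (ech ρ)) t.
Proof.
move=> HL HM c t; rewrite HL.
under eq_bigr do rewrite HM mulr_suml.
rewrite exchange_big; apply: eq_bigr => ρ _.
by rewrite [in RHS]HL mulr_sumr; apply: eq_bigr => σ _; rewrite mulrA.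
Qed.

Lemma cap_support (c : chain V) t : cap le 2 T c t != 0 ->
  exists s : {set V}, [/\ (2 < #|s|)%N, back le 2 s = t, c s != 0 & T (front le 2 s) != 0].
Proof.
rewrite /cap => hne.
case: (pickP (fun s : {set V} => (2 < #|s|)%N &&
   ((if back le 2 s == t then c s * T (front le 2 s) else 0) != 0))).
  move=> s /andP[hs]; case: (boolP (back le 2 s == t)) => bt; last by rewrite eqxx.
  by rewrite mulf_eq0 negb_or => /andP[h1 h2]; exists s; rewrite (eqP bt).
move=> h; move: hne; rewrite big1 ?eqxx // => s hs.
by move: (h s); rewrite hs /= => /negbFE/eqP.
Qed.

End Lin.

Theorem proposition3p6 (V : finType) (K L1 Dn : {set {set V}})
    (le : rel V) (T : cochain V) :
  is_complex K ->
  subcomplex L1 K -> full L1 K ->        (* L1 = K ∩ H_{1,0}, a full subcomplex *)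
  subcomplex Dn K ->                     (* D^n is a subcomplex *)
  rel_2cocycle K (Wcomplex K L1) le T -> (* T ∈ Z^2(K, W; Q) *)
  ordering K le -> good_ordering L1 le ->
  (* (1) T cap commutes with the boundary *)
  (forall (k : nat) (c : chain V), chain_in K k c ->
     bd le (cap le 2 T c) =1 cap le 2 T (bd le c)) /\
  (* (2) T cap maps C_k(K) into C_{k-2}(L1) *)
  (forall (k : nat) (c : chain V), chain_in K k c ->
     chain_in L1 (k - 2) (cap le 2 T c)) /\
  (* consequence: C_k(D^n) is sent into C_{k-2}(D^{n-1}), D^{n-1} = D^n ∩ L1 *)
  (forall (k : nat) (c : chain V), chain_in Dn k c ->
     chain_in (Dn :&: L1) (k - 2) (cap le 2 T c)).
Proof.
move=> Kc [L1K L1c] fullL [DnK Dnc] [cocT WT] [lr [la [lt ltot]]] good.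
have ordS : forall s, s \in K -> reflexive le /\ antisymmetric le /\ transitive le /\
    {in s &, forall v w, le v w || le w v}.
  by move=> s sK; split=> //; split=> //; split=> //; apply: ltot.
have key : forall k (c : chain V), chain_in K k c -> forall t, cap le 2 T c t != 0 ->
    exists s : {set V}, [/\ c s != 0, t \subset s, t != set0, t \in L1 & #|t| = (k - 2).+1%N].
  move=> k c hc t /cap_support [s [hs bt cs Tf]].
  have [sK cardk] := hc s cs.
  have oS := ordS s sK.
  have tsub : t \subset s by rewrite -bt; apply/subsetP=> x; rewrite inE => /andP[].
  have cb : #|back le 2 s| = (#|s| - 2)%N := cards_ge oS 2.
  have tn : t != set0 by rewrite -bt -cards_eq0 cb; apply/eqP; lia.
  set F := front le 2 s.
  have eF : F = [set x in s | (rank le s x < 3)%N] by apply/setP=> x; rewrite !inE ltnS.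
  have cF : #|F| = 3%N by rewrite eF card_rank_lt.
  have FK : F \in K.
    apply: Kc.2 sK _ _; first by apply/subsetP=> x; rewrite inE => /andP[].
    by rewrite -cards_eq0 cF.
  have [u uF uL] : exists2 u, u \in F & u \in vert L1.
    case: (boolP [exists u, (u \in F) && (u \in vert L1)]).
      by case/existsP=> u /andP[]; exists u.
    move/existsPn=> hn; exfalso; move/negP: Tf; apply; apply/eqP; apply: WT cF.
    rewrite inE FK /= disjoints_subset; apply/subsetP=> x xF; rewrite inE; apply/negP=> xL.
    by move: (hn x); rewrite xF xL.
  have tL : t \subset vert L1.
    apply/subsetP=> x xt; apply: (good u x uL).
    move: uF xt; rewrite -bt !inE => /andP[uS hu] /andP[xS hx].
    have [->|nux] := eqVneq u x; first exact: lr.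
    have : (rank le s u < rank le s x)%N.
      have : rank le s u != rank le s x.
        by apply: contra nux => /eqP/(rank_inj oS uS xS) ->.
      lia.
    by move/(lt_rank oS uS xS)/andP=> [].
  exists s; split => //.
    apply: fullL tL; apply: Kc.2 sK tsub tn.
  by rewrite -bt cb cardk; lia.
split.
  move=> k c hc t.
  rewrite (comp_rep (@bd_rep V le) (@cap_rep V le T)).
  rewrite (comp_rep (@cap_rep V le T) (@bd_rep V le)).
  apply: eq_bigr => σ _; case: (eqVneq (c σ) 0) => [->|cn]; first by rewrite !mul0r.
  have [σK _] := hc σ cn; congr (_ * _).
  apply: single (ordS σ σK) _ t => n3.
  have e4 : [set x in σ | (rank le σ x <= 3)%N] = [set x in σ | (rank le σ x < 4)%N].
    by apply/setP=> x; rewrite !inE.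
  have c4 : #|[set x in σ | (rank le σ x <= 3)%N]| = 4%N.
    by rewrite e4 (card_rank_lt (ordS σ σK) n3).
  apply: cocT (c4).
  apply: Kc.2 σK _ _; first by apply/subsetP=> x; rewrite inE => /andP[].
  by rewrite -cards_eq0 c4.
split.
  move=> k c hc t /(key k c hc) [s [_ _ _ tL ct]]; done.
move=> k c hc t hne.
have hcK : chain_in K k c.
  by move=> s /hc [sD cs]; split=> //; apply: (subsetP DnK).
have [s [cs tsub tn tL ct]] := key k c hcK t hne.
split=> //; rewrite inE tL andbT.
have [sD _] := hc s cs; exact: Dnc.2 sD tsub tn.
Qed.
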